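(* Let $\mathcal C$ be an epireflective subcategory of $\mathbf{Top}$ such that the reflection arrow $\mathrm{r}_{(X,\mathcal C)}$ is an open map for every topological space $X$, and let $\{X_i:i\in I\}$ be a set of topological spaces. Then $\mathcal C$ preserves the product $\prod_{i\in I}X_i$, i.e., the canonical map $\mu_{\mathcal C}\colon\mathrm{r}_{\mathcal C}\prod_{i\in I}X_i\to\prod_{i\in I}\mathrm{r}_{\mathcal C}X_i$ is a homeomorphism.
   Context: An epireflective subcategory $\mathcal C$ of $\mathbf{Top}$ is a full, isomorphism-closed subcategory closed under products and subspaces; each space $X$ has a reflection $\mathrm{r}_{\mathcal C}X\in\mathcal C$ with a continuous surjection $\mathrm{r}_{(X,\mathcal C)}\colon X\to\mathrm{r}_{\mathcal C}X$ through which every continuous map from $X$ into a space of $\mathcal C$ factors uniquely; $\mathrm{r}_{\mathcal C}(f)$ denotes the induced map. $\mu_{\mathcal C}$ is the unique continuous map with $\pi_j\circ\mu_{\mathcal C}=\mathrm{r}_{\mathcal C}(\pi_{X_j})$ for all $j$, where $\pi$ denote canonical projections. *)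

(* Defs.v *)
From HB Require Import structures.
From mathcomp Require Import all_boot all_algebra.
From mathcomp Require Import all_classical.
From mathcomp Require Import topology_structure function_spaces subtype_topology.
Set Implicit Arguments. Unset Strict Implicit. Unset Printing Implicit Defensive.
Local Open Scope classical_set_scope.

Definition homeomorphism {X Y : topologicalType} (f : X -> Y) : Prop :=
  continuous f /\
  exists g : Y -> X, [/\ continuous g, cancel f g & cancel g f].

(* A (full) subcategory of Top is given by its class of objects. *)
Definition iso_closed (C : topologicalType -> Prop) : Prop :=
  forall (X Y : topologicalType) (f : X -> Y), homeomorphism f -> C X -> C Y.

Definition product_closed (C : topologicalType -> Prop) : Prop :=
  forall (I : Type) (T : I -> topologicalType),
    (forall i, C (T i)) -> C (prod_topology T : topologicalType).

Definition subspace_closed (C : topologicalType -> Prop) : Prop :=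
  forall (X : topologicalType) (A : set X), C X -> C (set_type A : topologicalType).

Definition is_reflection (C : topologicalType -> Prop) (X R : topologicalType)
    (r : X -> R) : Prop :=
  [/\ C R, continuous r, (forall y : R, exists x : X, r x = y) &
      forall (Y : topologicalType), C Y -> forall f : X -> Y, continuous f ->
        exists! g : R -> Y, continuous g /\ g \o r = f].

Definition epireflective (C : topologicalType -> Prop)
    (refl : topologicalType -> topologicalType)
    (rX : forall X : topologicalType, X -> refl X) : Prop :=
  [/\ iso_closed C, product_closed C, subspace_closed C &
      forall X : topologicalType, is_reflection C (rX X)].

(* [g] is the induced map r_C(f) : refl X -> refl Y of a continuous f : X -> Y,
   i.e. the (unique) continuous g with g o r_X = r_Y o f *)
Definition is_refl_map (refl : topologicalType -> topologicalType)
    (rX : forall X : topologicalType, X -> refl X)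
    (X Y : topologicalType) (f : X -> Y) (g : refl X -> refl Y) : Prop :=
  continuous g /\ g \o rX X = rX Y \o f.

Definition open_map {X Y : topologicalType} (f : X -> Y) : Prop :=
  forall A : set X, open A -> open (f @` A).

Definition is_mu (refl : topologicalType -> topologicalType)
    (rX : forall X : topologicalType, X -> refl X)
    (I : Type) (X : I -> topologicalType)
    (mu : refl (prod_topology X : topologicalType) ->
          prod_topology (fun i => refl (X i))) : Prop :=
  continuous (mu : _ -> (prod_topology (fun i => refl (X i)) : topologicalType)) /\
  forall j : I,
    is_refl_map rX (fun x : (prod_topology X : topologicalType) => x j)
                   (fun z => mu z j).

(* Main.v *)
Require Import Defs.
From HB Require Import structures.
From mathcomp Require Import all_boot all_algebra.
From mathcomp Require Import all_classical.
From mathcomp Require Import topology_structure function_spaces subtype_topology.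
From mathcomp Require Import supremum_topology initial_topology.
Set Implicit Arguments. Unset Strict Implicit. Unset Printing Implicit Defensive.
Local Open Scope classical_set_scope.

Lemma box_nbhs (I : eqType) (T : I -> topologicalType) (x : prod_topology T)
  (S : set (prod_topology T)) :
  nbhs x S <-> exists (K : seq I) (V : forall i, set (T i)),
    (forall i, open (V i) /\ V i (x i)) /\
    (forall z : prod_topology T, (forall i, i \in K -> V i (z i)) -> S z).
Proof.
split; last first.
  move=> [K [V [HV HS]]].
  apply: (filterS HS); clear HS.
  elim: K => [|k K IH].
    by apply: filterE => z i; rewrite in_nil.
  have Hk : nbhs x (proj k @^-1` V k).
    apply: (@proj_continuous I T k x).
    by apply: open_nbhs_nbhs; split; case: (HV k).
  apply: filterS (filterI Hk IH) => z [Hz1 Hz2] i.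
  rewrite in_cons => /orP [/eqP -> //|]; exact: Hz2.
move=> Sx.
pose F : set_system (prod_topology T) := fun S => exists (K : seq I) (V : forall i, set (T i)),
    (forall i, open (V i) /\ V i (x i)) /\
    (forall z : prod_topology T, (forall i, i \in K -> V i (z i)) -> S z).
have FF : Filter F.
  constructor.
  - by exists [::], (fun _ => setT); split => // i; split => //; exact: openT.
  - move=> P Q [K1 [V1 [H1 P1]]] [K2 [V2 [H2 Q2]]].
    exists (K1 ++ K2), (fun i => V1 i `&` V2 i); split.
      move=> i; case: (H1 i) => o1 x1; case: (H2 i) => o2 x2.
      by split; [exact: openI|].
    move=> z Hz; split.
      by apply: P1 => i iK; case: (Hz i) => //; rewrite mem_cat iK.
    by apply: Q2 => i iK; case: (Hz i) => //; rewrite mem_cat iK orbT.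
  - move=> P Q PQ [K [V [H1 H2]]]; exists K, V; split => // z /H2; exact: PQ.
have Fx : F --> (x : prod_topology T).
  apply/cvg_sup => i A.
  have /= -> := @nbhsE (initial_topology (fun f : prod_topology T => f i)) x.
  case=> B [[C oC <-] Bx] BA.
  exists [:: i], (@dfwith I (fun j => set (T j)) (fun j => setT) i C); split.
    move=> j; case: dfwithP => [|k _]; first by split.
    by split => //; exact: openT.
  move=> z /(_ i); rewrite mem_seq1 eqxx => /(_ isT).
  rewrite dfwithin => Cz.
  exact: BA.
exact: Fx.
Qed.
Lemma cont_comp (U V W : topologicalType) (f : U -> V) (g : V -> W) :
  continuous f -> continuous g -> continuous (g \o f).
Proof. by move=> cf cg x; apply: continuous_comp; [exact: cf|exact: cg]. Qed.

Lemma single_change (I : eqType) C refl rX (hC : @epireflective C refl rX)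
  (X : I -> topologicalType) (z z' : prod_topology X) k :
  (forall j, j != k -> z j = z' j) -> rX (X k) (z k) = rX (X k) (z' k) ->
  rX (prod_topology X : topologicalType) z = rX _ z'.
Proof.
move=> zz' rk.
case: hC => _ _ _ hr.
have [CR _ _ _] := hr (prod_topology X : topologicalType).
have [_ _ _ univk] := hr (X k).
have ce : continuous (dfwith z k : X k -> prod_topology X) := @dfwith_continuous I X z k.
have [_ crP _ _] := hr (prod_topology X : topologicalType).
have [g [[cg eg] _]] := univk _ CR _ (cont_comp ce crP).
have ez : z = dfwith z k (z k).
  apply: functional_extensionality_dep => j; case: dfwithP => //.
have ez' : z' = dfwith z k (z' k).
  apply: functional_extensionality_dep => j; case: dfwithP => // i ik.
  by rewrite zz' // eq_sym.
transitivity (rX (prod_topology X : topologicalType) (dfwith z k (z k))); first by rewrite -ez.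
transitivity (rX (prod_topology X : topologicalType) (dfwith z k (z' k))); last by rewrite -ez'.
have := congr1 (fun h => h (z k)) eg; have := congr1 (fun h => h (z' k)) eg.
by move=> /= <- <-; rewrite rk.
Qed.

Lemma main_eq (I : eqType)
  (C : topologicalType -> Prop)
  (refl : topologicalType -> topologicalType)
  (rX : forall X : topologicalType, X -> refl X)
  (hC : @epireflective C refl rX)
  (hopen : forall X : topologicalType, open_map (rX X))
  (X : I -> topologicalType) :
  (exists mu, @is_mu refl rX I X mu) /\
  (forall mu, @is_mu refl rX I X mu ->
     @homeomorphism (refl (prod_topology X : topologicalType))
                    (prod_topology (fun i => refl (X i)) : topologicalType) mu).
Proof.
have hC' := hC.
case: hC => isoC prodC subC hr.
set P := (prod_topology X : topologicalType).
set Q := (prod_topology (fun i => refl (X i)) : topologicalType).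
pose p : P -> Q := fun x i => rX (X i) (x i).
have surj i (y : refl (X i)) : exists x, rX (X i) x = y.
  by have [_ _ s _] := hr (X i); exact: s.
have crX (Y : topologicalType) : continuous (rX Y) by have [_ c _ _] := hr Y.
have CQ : C Q by apply: prodC => i; have [c _ _ _] := hr (X i).
have CP : C (refl P) by have [c _ _ _] := hr P.
have cp : continuous p.
  move=> x S /box_nbhs [K [V [HV HS]]].
  apply/box_nbhs; exists K, (fun i => rX (X i) @^-1` V i); split.
    move=> i; split; last by case: (HV i).
    by apply: (continuousP _).1; [exact: crX|case: (HV i)].
  by move=> z Hz; apply: HS.
have psurj (y : Q) : exists x : P, p x = y.
  exists (fun i => proj1_sig (cid (surj i (y i)))).
  apply: functional_extensionality_dep => i.
  by rewrite /p; case: (cid _).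
have popen (W : set P) : open W -> open (p @` W).
  move=> oW; rewrite openE => _ [w Ww <-].
  have : nbhs w W by apply: open_nbhs_nbhs.
  move=> /box_nbhs [K [V [HV HS]]].
  apply/box_nbhs; exists K, (fun i => rX (X i) @` V i); split.
    move=> i; split; first by apply: hopen; case: (HV i).
    by exists (w i) => //; case: (HV i).
  move=> z' Hz'.
  have H i : exists t, rX (X i) t = z' i /\ (i \in K -> V i t).
    case: (boolP (i \in K)) => iK.
      by have [t Vt e] := Hz' i iK; exists t.
    by have [t e] := surj i (z' i); exists t.
  exists (fun i => proj1_sig (cid (H i))).
    by apply: HS => i iK; case: (cid (H i)) => t /= [_ ]; apply.
  apply: functional_extensionality_dep => i.
  by rewrite /p; case: (cid (H i)) => t /= [].
have mix (x y : P) : (forall i, rX (X i) (x i) = rX (X i) (y i)) ->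
    forall K : seq I, rX P (fun i => if i \in K then x i else y i) = rX P y.
  move=> hxy; elim => [|k K IH].
    by congr (rX P _); apply: functional_extensionality_dep => i.
  rewrite -IH; apply: (@single_change I C refl rX hC' X _ _ k).
    by move=> j jk /=; rewrite in_cons (negbTE jk).
  rewrite /= in_cons eqxx /=; case: (k \in K) => //.
have indist (x y : P) : (forall i, rX (X i) (x i) = rX (X i) (y i)) ->
    forall U, open U -> U (rX P x) -> U (rX P y).
  move=> hxy U oU Ux.
  have : nbhs x (rX P @^-1` U).
    apply: open_nbhs_nbhs; split => //.
    by apply: (continuousP _).1; [exact: crX|].
  move=> /box_nbhs [K [V [HV HS]]].
  rewrite -(mix x y hxy K); apply: HS => i iK; rewrite iK.
  by case: (HV i).
have rPsurj (a : refl P) : exists x : P, rX P x = a by have [_ _ s _] := hr P.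
split.
  have [_ _ _ univ] := hr P.
  have [g [[cg eg] _]] := univ Q CQ p cp.
  exists g; split => // j; split.
    exact: (cont_comp cg (@proj_continuous I (fun i => refl (X i)) j)).
  apply: funext => x /=.
  by have := congr1 (fun h => h x j) eg.
move=> mu [cmu hmu].
have mup (x : P) : mu (rX P x) = p x.
  apply: functional_extensionality_dep => j; have [_ e] := hmu j.
  exact: (congr1 (fun h => h x) e).
have musurj (y : Q) : exists a, mu a = y.
  by have [x <-] := psurj y; exists (rX P x); rewrite mup.
have muinj (a b : refl P) : mu a = mu b -> a = b.
  have [x <-] := rPsurj a; have [y <-] := rPsurj b.
  rewrite !mup => pxy.
  have hxy i : rX (X i) (x i) = rX (X i) (y i).
    by have := congr1 (fun h => h i) pxy.
  have [//|ab] := pselect (rX P x = rX P y).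
  have I1 := indist x y hxy.
  have I2 := indist y x (fun i => esym (hxy i)).
  have rinj i (u v : X i) : rX (X i) u = rX (X i) v -> u = v.
    move=> ruv; have [//|uv] := pselect (u = v).
    pose f : X i -> refl P := fun t => if pselect (t = u) then rX P x else rX P y.
    have cf : continuous f.
      apply/continuousP => A oA.
      have [Ax|nAx] := pselect (A (rX P x)).
        have -> : f @^-1` A = setT.
          apply/seteqP; split => // t _; rewrite /f /preimage /=.
          by case: pselect => ? //; apply: I1.
        exact: openT.
      have -> : f @^-1` A = set0.
        apply/seteqP; split => // t; rewrite /f /preimage /=.
        case: pselect => ? // Ay; exfalso; exact: nAx (I2 _ oA Ay).
      exact: open0.
    have [_ _ _ univi] := hr (X i).
    have [g [[cg eg] _]] := univi _ CP f cf.
    have gu := congr1 (fun h => h u) eg; have gv := congr1 (fun h => h v) eg.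
    move: gu gv; rewrite /= ruv => -> ; rewrite /f.
    case: pselect => [?|]; last by [].
    case: pselect => [vu|?]; first by move=> _; exact: esym vu.
    by move=> e; exfalso; exact: ab e.
  suff -> : x = y by [].
  by apply: functional_extensionality_dep => i; apply: rinj.
split => //.
exists (fun y => proj1_sig (cid (musurj y))); split.
- apply/continuousP => A oA.
  have -> : (fun y => proj1_sig (cid (musurj y))) @^-1` A = mu @` A.
    apply/seteqP; split => y.
      by rewrite /preimage /=; case: (cid _) => a /= <- Aa; exists a.
    case=> a Aa <-; rewrite /preimage /=; case: (cid _) => b /= /muinj ->.
    done.
  have -> : mu @` A = p @` (rX P @^-1` A).
    apply/seteqP; split => y.
      case=> a Aa <-; have [x ex] := rPsurj a; exists x; first by rewrite /preimage /= ex.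
      by rewrite -mup ex.
    by case=> x Ax <-; exists (rX P x) => //; rewrite mup.
  apply: popen; apply: (continuousP _).1; [exact: crX|exact: oA].
- by move=> a; case: (cid _) => b /= /muinj.
- by move=> y; case: (cid _).
Qed.

Theorem proposition4p1
  (C : topologicalType -> Prop)
  (refl : topologicalType -> topologicalType)
  (rX : forall X : topologicalType, X -> refl X)
  (hC : @epireflective C refl rX)
  (hopen : forall X : topologicalType, open_map (rX X))
  (I : Type) (X : I -> topologicalType) :
  (exists mu, @is_mu refl rX I X mu) /\
  (forall mu, @is_mu refl rX I X mu ->
     @homeomorphism (refl (prod_topology X : topologicalType))
                    (prod_topology (fun i => refl (X i)) : topologicalType) mu).
Proof.
exact: (@main_eq {classic I} C refl rX hC hopen X).
Qed.
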